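(* Let $G$ be an SE-graph and let $P,Q$ be standard, weakly intersecting directed paths in $G$ with $\alpha(t_P)=\alpha(t_Q)$, and with either $\alpha(s_P)\ne\alpha(s_Q)$ or $\alpha(s_P)=\alpha(s_Q)=0$. Suppose $P$ is lower than $Q$. Then $w(P)w(Q)=q\,w(Q)w(P)$.
   Context: Fix a field $\mathbb K$, $q\in\mathbb K^\ast$. An SE-graph is a finite directed graph $G=(V,E)$ embedded in the plane (planar) whose edges are horizontal directed to the right (H-edges) or vertical directed downward (V-edges), with sources $r_1,\dots,r_m$ on a vertical line in this order upward and sinks $c_1,\dots,c_n$ on a horizontal line in order left to right, sources incident only to H-edges and sinks only to V-edges, every vertex lying on a directed source-to-sink path. Here the sources lie on the ray $\{0\}\times\mathbb R_{\ge0}$ and the sinks on the ray $\mathbb R_{\ge 0}\times\{0\}$; a point $v$ has coordinates $(\alpha(v),\beta(v))$. Standing convention: two vertices have the same first (resp. second) coordinate if and only if they lie on a common vertical (resp. horizontal) directed path of $G$. Let $W$ be the inner vertices; $\mathcal L_G$ is the $\mathbb K$-algebra of Laurent polynomials in $W$ with, for distinct $u,v\in W$: $uv=qvu$ if there is a directed horizontal path from $u$ to $v$; $vu=quv$ if there is a directed vertical path from $u$ to $v$; $uv=vu$ otherwise. Edge weights: $w(e)=v$ if $e=(u,v)$ with $u$ a source; $w(e)=u^{-1}v$ for an H-edge $e=(u,v)$ with $u,v\in W$; $w(e)=1$ for V-edges. The weight of a directed path is the ordered product of its edge weights. For a directed path $P$, $s_P,t_P$ are its first and last vertices; $P$ is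 standard if it has at least one H-edge. $P,Q$ are weakly intersecting if $P\cap Q=\{s_P,t_P\}\cap\{s_Q,t_Q\}$. For weakly intersecting $P,Q$, $P$ is lower than $Q$ if there are points $x\in P$, $y\in Q$ with $\alpha(x)=\alpha(y)$ and $\beta(x)<\beta(y)$. *)

(* Defs.v *)
From HB Require Import structures.
From mathcomp Require Import all_boot all_order all_algebra.
From mathcomp Require Import reals.
Set Implicit Arguments. Unset Strict Implicit. Unset Printing Implicit Defensive.
Import Order.TTheory GRing.Theory Num.Theory.
Local Open Scope ring_scope.

Section SEGraphs.
Variables (R : realType) (V : finType) (E : rel V) (alpha beta : V -> R)
  (m n : nat) (src : 'I_m -> V) (snk : 'I_n -> V).

Definition is_src (v : V) : bool := [exists i, src i == v].
Definition is_snk (v : V) : bool := [exists j, snk j == v].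
Definition inner (v : V) : bool := ~~ is_src v && ~~ is_snk v.

(* H-edges (horizontal, to the right) and V-edges (vertical, downward) *)
Definition Hedge : rel V := fun u v => E u v && (beta u == beta v).
Definition Vedge : rel V := fun u v => E u v && (alpha u == alpha v).

Definition onseg (u v : V) (a b : R) : bool :=
  (Order.min (alpha u) (alpha v) <= a <= Order.max (alpha u) (alpha v)) &&
  (Order.min (beta u) (beta v) <= b <= Order.max (beta u) (beta v)).

Record SE_graph : Prop := {
  coord_inj : forall u v, alpha u = alpha v -> beta u = beta v -> u = v;
  edge_HV : forall u v, E u v ->
    (beta u = beta v /\ alpha u < alpha v) \/ (alpha u = alpha v /\ beta v < beta u);
  planar_vertex : forall u v w, E u v -> onseg u v (alpha w) (beta w) -> w = u \/ w = v;
  planar_edges : forall u v u' v', E u v -> E u' v' -> (u, v) <> (u', v') ->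
    forall a b, onseg u v a b -> onseg u' v' a b ->
    exists z, (z = u \/ z = v) /\ (z = u' \/ z = v') /\ a = alpha z /\ b = beta z;
  src_pos : forall i, alpha (src i) = 0 /\ 0 <= beta (src i);
  src_order : forall i j : 'I_m, (i < j)%N -> beta (src i) < beta (src j);
  snk_pos : forall j, beta (snk j) = 0 /\ 0 <= alpha (snk j);
  snk_order : forall i j : 'I_n, (i < j)%N -> alpha (snk i) < alpha (snk j);
  src_snk_disj : forall i j, src i <> snk j;
  src_no_in : forall u i, ~ E u (src i);
  snk_no_out : forall j v, ~ E (snk j) v;
  src_H : forall i v, E (src i) v -> beta (src i) = beta v;
  snk_V : forall j u, E u (snk j) -> alpha u = alpha (snk j);
  on_src_snk_path : forall v, exists i j, connect E (src i) v /\ connect E v (snk j);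
  (* standing convention (not imposed on pairs of distinct sources, resp. sinks) *)
  conv_alpha : forall u v, ~ (is_src u /\ is_src v /\ u <> v) ->
    (alpha u = alpha v <-> connect Vedge u v \/ connect Vedge v u);
  conv_beta : forall u v, ~ (is_snk u /\ is_snk v /\ u <> v) ->
    (beta u = beta v <-> connect Hedge u v \/ connect Hedge v u)
}.

(* A directed path is given by its first vertex s and the list p of the
   following vertices, with [path E s p]; its last vertex is [last s p]. *)
Definition pedges (s : V) (p : seq V) : seq (V * V) := zip (s :: p) p.

Definition standard (s : V) (p : seq V) : bool :=
  has (fun e : V * V => beta e.1 == beta e.2) (pedges s p).

Definition on_dpath (s : V) (p : seq V) (a b : R) : Prop :=
  (exists z, z \in s :: p /\ a = alpha z /\ b = beta z) \/
  (exists e, e \in pedges s p /\ onseg e.1 e.2 a b).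

Definition weakly_intersecting (sP : V) (pP : seq V) (sQ : V) (pQ : seq V) : Prop :=
  forall a b, (on_dpath sP pP a b /\ on_dpath sQ pQ a b) <->
    exists z, z \in [:: sP; last sP pP] /\ z \in [:: sQ; last sQ pQ] /\
              a = alpha z /\ b = beta z.

Definition lower (sP : V) (pP : seq V) (sQ : V) (pQ : seq V) : Prop :=
  exists a b b', on_dpath sP pP a b /\ on_dpath sQ pQ a b' /\ b < b'.

(* The algebra L_G: a K-algebra A together with x : V -> A such that the
   x w (w in W) are invertible and satisfy the defining relations of L_G.
   Quantifying over all such (A, x) is the universal property of L_G. *)
Variables (K : fieldType) (A : unitAlgType K).

Definition LG_relations (q : K) (x : V -> A) : Prop :=
  (forall u, inner u -> x u \is a GRing.unit) /\
  (forall u v, inner u -> inner v -> u <> v ->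
     (connect Hedge u v -> x u * x v = q *: (x v * x u)) /\
     (connect Vedge u v -> x v * x u = q *: (x u * x v)) /\
     (~~ connect Hedge u v -> ~~ connect Hedge v u ->
      ~~ connect Vedge u v -> ~~ connect Vedge v u -> x u * x v = x v * x u)).

Definition edge_weight (x : V -> A) (e : V * V) : A :=
  if is_src e.1 then x e.2
  else if inner e.1 && inner e.2 && (beta e.1 == beta e.2) then (x e.1)^-1 * x e.2
  else 1.

Definition path_weight (x : V -> A) (s : V) (p : seq V) : A :=
  \prod_(e <- pedges s p) edge_weight x e.

End SEGraphs.

(* Main.v *)
Require Import Defs.
From HB Require Import structures.
From mathcomp Require Import all_boot all_order all_algebra.
From mathcomp Require Import reals.
From mathcomp Require Import ring lra.
Import Order.TTheory GRing.Theory Num.Theory.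
Local Open Scope ring_scope.

Module A1.
Import Order.TTheory GRing.Theory Num.Theory.
Local Open Scope ring_scope.
Set Implicit Arguments. Unset Strict Implicit. Unset Printing Implicit Defensive.

Section Alg.
Variables (K : fieldType) (A : unitAlgType K) (q : K).
Hypothesis q0 : q != 0.

Definition qc (a b : A) (k : int) := a * b = (q ^ k) *: (b * a).

Lemma qc1l b : qc 1 b 0.
Proof. by rewrite /qc expr0z scale1r mul1r mulr1. Qed.

Lemma qc_mull a1 a2 b k1 k2 : qc a1 b k1 -> qc a2 b k2 -> qc (a1 * a2) b (k1 + k2).
Proof.
rewrite /qc => h1 h2.
rewrite -mulrA h2 -scalerAr [a1 * (b * a2)]mulrA h1 -scalerAl scalerA.
by rewrite expfzDr // mulrC !mulrA.
Qed.

Lemma qc_sym a b k : qc a b k -> qc b a (- k).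
Proof.
rewrite /qc => h; rewrite h scalerA -expfzDr // addNr expr0z scale1r //.
Qed.

Lemma qc_invl a b k : a \is a GRing.unit -> qc a b k -> qc a^-1 b (- k).
Proof.
move=> ua h; apply: qc_sym; rewrite /qc.
have -> : b * a^-1 = a^-1 * (a * b) * a^-1 by rewrite mulKr.
by rewrite h -scalerAr -scalerAl !mulrA mulrK.
Qed.

Lemma qc_mulr a b1 b2 k1 k2 : qc a b1 k1 -> qc a b2 k2 -> qc a (b1 * b2) (k1 + k2).
Proof.
move=> h1 h2; rewrite -(opprK (k1 + k2)); apply: qc_sym.
rewrite opprD; exact: qc_mull (qc_sym h1) (qc_sym h2).
Qed.

Lemma qc_invr a b k : b \is a GRing.unit -> qc a b k -> qc a b^-1 (- k).
Proof.
move=> ub h; rewrite -(opprK (- k)); apply: qc_sym; exact: qc_invl (qc_sym h).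
Qed.

Lemma qc1r a : qc a 1 0.
Proof. rewrite -oppr0; apply: qc_sym; exact: qc1l. Qed.

Lemma qc_prodl (I : eqType) (s : seq I) (F : I -> A) (k : I -> int) b :
  (forall i, i \in s -> qc (F i) b (k i)) ->
  qc (\prod_(i <- s) F i) b (\sum_(i <- s) k i).
Proof.
elim: s => [|i s IH] h; first by rewrite !big_nil; exact: qc1l.
rewrite !big_cons; apply: qc_mull; first by apply: h; rewrite mem_head.
by apply: IH => j hj; apply: h; rewrite in_cons hj orbT.
Qed.

Lemma qc_prodr (I : eqType) (s : seq I) (F : I -> A) (k : I -> int) a :
  (forall i, i \in s -> qc a (F i) (k i)) ->
  qc a (\prod_(i <- s) F i) (\sum_(i <- s) k i).
Proof.
elim: s => [|i s IH] h; first by rewrite !big_nil; exact: qc1r.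
rewrite !big_cons; apply: qc_mulr; first by apply: h; rewrite mem_head.
by apply: IH => j hj; apply: h; rewrite in_cons hj orbT.
Qed.
End Alg.

End A1.
Import A1.

Module A2.
Import Order.TTheory GRing.Theory Num.Theory.
Local Open Scope ring_scope.
Set Implicit Arguments. Unset Strict Implicit. Unset Printing Implicit Defensive.

Section Graph.
Variables (R : realType) (V : finType) (E : rel V) (alpha beta : V -> R)
  (m n : nat) (src : 'I_m -> V) (snk : 'I_n -> V).
Hypothesis HG : SE_graph E alpha beta src snk.

Local Notation isrc := (is_src src).
Local Notation isnk := (is_snk snk).
Local Notation inn := (inner src snk).
Local Notation onp := (on_dpath alpha beta).

Lemma eHV u v : E u v ->
  (beta u = beta v /\ alpha u < alpha v) \/ (alpha u = alpha v /\ beta v < beta u).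
Proof. by move=> e; case: (edge_HV HG e) => h; [left|right]. Qed.

Lemma cinj u v : alpha u = alpha v -> beta u = beta v -> u = v.
Proof. by move=> h1 h2; apply: (coord_inj HG). Qed.

Lemma no_loop u : ~ E u u.
Proof. by move=> e; case: (eHV e) => -[_]; rewrite ltxx. Qed.

Lemma no_in u v : E u v -> ~~ isrc v.
Proof. by move=> e; apply/existsP => -[i /eqP hi]; subst v; exact: (src_no_in HG e). Qed.

Lemma no_out u v : E u v -> ~~ isnk u.
Proof. by move=> e; apply/existsP => -[i /eqP hi]; subst u; exact: (snk_no_out HG e). Qed.

Lemma src_edge u v : E u v -> isrc u -> beta u = beta v /\ inn v.
Proof.
move=> e /existsP [i /eqP hi]; subst u; have hb := src_H HG e; split => //.
rewrite /inner (no_in e) /=; apply/existsP => -[j /eqP hj]; subst v.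
have ha := snk_V HG e; have h := cinj ha hb; rewrite h in e; exact: no_loop e.
Qed.

Lemma h_edge u v : E u v -> ~~ isrc u -> beta u = beta v -> inn u /\ inn v.
Proof.
move=> e nu hb; split; first by rewrite /inner nu (no_out e).
rewrite /inner (no_in e) /=; apply/existsP => -[j /eqP hj]; subst v.
have ha := snk_V HG e; have h := cinj ha hb; subst u; exact: no_loop e.
Qed.

Lemma connectH u v : connect (Hedge E beta) u v -> beta u = beta v /\ alpha u <= alpha v.
Proof.
case/connectP => p; elim: p u => [|y p IH] u /=; first by move=> _ ->.
case/andP => /andP [e /eqP hb] pth hl; have [h1 h2] := IH _ pth hl.
split; first by rewrite hb.
apply: le_trans h2; case: (eHV e) => -[h3 h4]; first exact: ltW.
by move: h4; rewrite hb ltxx.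
Qed.

Lemma connectV u v : connect (Vedge E alpha) u v -> alpha u = alpha v /\ beta v <= beta u.
Proof.
case/connectP => p; elim: p u => [|y p IH] u /=; first by move=> _ ->.
case/andP => /andP [e /eqP hb] pth hl; have [h1 h2] := IH _ pth hl.
split; first by rewrite hb.
apply: le_trans h2 _; case: (eHV e) => -[h3 h4]; last exact: ltW.
by move: h4; rewrite hb ltxx.
Qed.

Lemma alpha0_src v : alpha v = 0 -> isrc v.
Proof.
move=> h0; case: (boolP (isrc v)) => // nv.
have [i [j [c1 _]]] := on_src_snk_path HG v.
have si : isrc (src i) by apply/existsP; exists i.
have ha : alpha (src i) = alpha v by rewrite h0; case: (src_pos HG i).
have hnot : ~ (isrc (src i) /\ isrc v /\ src i <> v) by move=> [_ [h _]]; rewrite h in nv.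
case: ((conv_alpha HG hnot).1 ha).
- case/connectP => -[|y p] /=; first by move=> _ h; rewrite h si in nv.
  case/andP => /andP [e /eqP hb] _ _.
  have hb' := src_H HG e; have h := cinj hb hb'; rewrite -h in e; case: (no_loop e).
- case/connectP => p; case/lastP: p => [|p y] /=; first by move=> _ h; rewrite -h si in nv.
  rewrite rcons_path last_rcons => /andP [_ /andP [e _]] hy; subst y.
  case: (src_no_in HG e).
Qed.

Lemma path_uniq s p : path E s p -> uniq (s :: p).
Proof.
move=> pth; apply: (@sorted_uniq _ (fun u v => alpha u - beta u < alpha v - beta v)).
- by move=> y x z; apply: lt_trans.
- by move=> x; rewrite ltxx.
- rewrite /sorted; apply: sub_path pth => u v e.
  by case: (eHV e) => -[h1 h2]; lra.
Qed.

Lemma onsegP u v a b : E u v -> onseg alpha beta u v a b <->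
  (beta u = beta v /\ alpha u <= a <= alpha v /\ b = beta u) \/
  (alpha u = alpha v /\ a = alpha u /\ beta v <= b <= beta u).
Proof.
move=> e; rewrite /onseg; case: (eHV e) => -[h1 h2].
- rewrite h1 (min_l (ltW h2)) (max_r (ltW h2)) minxx maxxx -eq_le.
  split; first by case/andP => h3 /eqP h4; left; split => //.
  case => -[h3 [h4 h5]]; first by rewrite h4 h5 eqxx.
  by move: h2; rewrite h3 ltxx.
- rewrite h1 (min_r (ltW h2)) (max_l (ltW h2)) minxx maxxx -eq_le.
  split; first by case/andP => /eqP h3 h4; right; split.
  case => -[h3 [h4 h5]]; last by rewrite h4 eqxx h5.
  by move: h2; rewrite h3 ltxx.
Qed.

Lemma onp_nil s a b : onp s [::] a b <-> a = alpha s /\ b = beta s.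
Proof.
rewrite /on_dpath; split.
- case => -[z [hz h]]; last by move: hz; rewrite /pedges /= in_nil.
  by move: hz h; rewrite inE => /eqP -> [-> ->].
- by move=> [-> ->]; left; exists s; rewrite mem_head.
Qed.

Lemma onseg_l u v : onseg alpha beta u v (alpha u) (beta u).
Proof. by rewrite /onseg ge_min le_max lexx ge_min le_max lexx. Qed.
Lemma onseg_r u v : onseg alpha beta u v (alpha v) (beta v).
Proof. by rewrite /onseg ge_min le_max lexx ge_min le_max lexx !orbT. Qed.

Lemma onp_cons s y p a b : onp s (y :: p) a b <-> onseg alpha beta s y a b \/ onp y p a b.
Proof.
rewrite /on_dpath; split.
- case => -[z [hz h]].
  + move: hz; rewrite inE => /orP [/eqP hz|hz]; last by right; left; exists z.
    by subst z; case: h => -> ->; left; exact: onseg_l.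
  + move: hz; rewrite /pedges /= inE => /orP [/eqP hz|hz]; last by right; right; exists z.
    by subst z; left.
- case => [h|[[z [hz h]]|[z [hz h]]]].
  + by right; exists (s, y); rewrite /pedges /= mem_head.
  + by left; exists z; rewrite inE hz orbT.
  + by right; exists z; rewrite /pedges /= inE hz orbT.
Qed.

Lemma onp_vertex s p z : z \in s :: p -> onp s p (alpha z) (beta z).
Proof. by move=> hz; left; exists z. Qed.

Lemma onp_edge s p e a b : e \in pedges s p -> onseg alpha beta e.1 e.2 a b -> onp s p a b.
Proof. by move=> he hs; right; exists e. Qed.


Lemma segF u v a b : E u v -> onseg alpha beta u v a b ->
  (beta u = beta v /\ alpha u < alpha v /\ alpha u <= a /\ a <= alpha v /\ b = beta u) \/
  (alpha u = alpha v /\ beta v < beta u /\ a = alpha u /\ beta v <= b /\ b <= beta u).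
Proof.
move=> e /(onsegP _ _ e) [[h1 [/andP [h2 h3] h4]]|[h1 [h2 /andP [h3 h4]]]];
  case: (eHV e) => -[h5 h6].
- by left.
- by move: h6; rewrite h1 ltxx.
- by move: h6; rewrite h1 ltxx.
- by right.
Qed.

Lemma segH u v a : beta u = beta v -> alpha u <= a -> a <= alpha v ->
  onseg alpha beta u v a (beta u).
Proof.
move=> h1 h2 h3; rewrite /onseg h1 minxx maxxx lexx ge_min le_max h2 h3.
by rewrite ?orbT ?andbT.
Qed.

Lemma segV u v b : alpha u = alpha v -> beta v <= b -> b <= beta u ->
  onseg alpha beta u v (alpha u) b.
Proof.
move=> h1 h2 h3; rewrite /onseg h1 minxx maxxx lexx ge_min le_max h2 h3.
by rewrite ?orbT ?andbT.
Qed.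

Lemma quad s p a b : path E s p -> onp s p a b ->
  [/\ alpha s <= a, a <= alpha (last s p), beta (last s p) <= b & b <= beta s].
Proof.
elim: p s a b => [|y p IH] s a b /=.
  by move=> _ /onp_nil [-> ->]; rewrite !lexx.
case/andP => e pth /onp_cons [hs|hr].
- have [h1 h2 h3 h4] := IH _ _ _ pth (onp_vertex (mem_head y p)).
  case: (segF e hs) => -[h5 [h6 [h7 [h8 h9]]]]; split; lra.
- have [h1 h2 h3 h4] := IH _ _ _ pth hr.
  case: (eHV e) => -[h5 h6]; split; lra.
Qed.

Lemma quadv s p z : path E s p -> z \in s :: p ->
  [/\ alpha s <= alpha z, alpha z <= alpha (last s p), beta (last s p) <= beta z & beta z <= beta s].
Proof. by move=> pth hz; apply: quad pth (onp_vertex hz). Qed.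

Lemma pedges_mem s p e : path E s p -> e \in pedges s p ->
  [/\ E e.1 e.2, e.1 \in s :: p & e.2 \in p].
Proof.
elim: p s => [|y p IH] s //=; case/andP => ey pth.
rewrite /pedges /= inE => /orP [/eqP ->|he]; first by rewrite /= mem_head ey inE eqxx.
have [h1 h2 h3] := IH _ pth he; split => //; rewrite inE ?h2 ?h3 ?orbT //.
Qed.

Lemma pmono s p a1 b1 a2 b2 : path E s p -> onp s p a1 b1 -> onp s p a2 b2 ->
  a1 < a2 -> b2 <= b1.
Proof.
elim: p s => [|y p IH] s /=.
  by move=> _ /onp_nil [-> _] /onp_nil [-> _]; rewrite ltxx.
case/andP => e pth /onp_cons h1 /onp_cons h2 lt12.
case: h1 => [h1|h1]; case: h2 => [h2|h2].
- case: (segF e h1) => -[h3 [h4 [h5 [h6 h7]]]];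
  case: (segF e h2) => -[h8 [h9 [h10 [h11 h12]]]]; lra.
- have [h3 h4 h5 h6] := quad pth h2.
  case: (segF e h1) => -[h7 [h8 [h9 [h10 h11]]]]; lra.
- have [h3 h4 h5 h6] := quad pth h1.
  case: (segF e h2) => -[h7 [h8 [h9 [h10 h11]]]]; lra.
- exact: IH pth h1 h2 lt12.
Qed.

Lemma pexist s p a : path E s p -> alpha s <= a -> a <= alpha (last s p) -> exists b, onp s p a b.
Proof.
elim: p s => [|y p IH] s /=.
  move=> _ h1 h2; exists (beta s); apply/onp_nil; split => //; lra.
case/andP => e pth h1 h2.
case: (leP a (alpha y)) => h3.
- exists (beta s); apply/onp_cons; left.
  case: (eHV e) => -[h4 h5]; first exact: segH.
  have -> : a = alpha s by lra.
  apply: segV => //; exact: ltW.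
- have [b hb] := IH _ pth (ltW h3) h2.
  by exists b; apply/onp_cons; right.
Qed.

Lemma pconvex s p a b0 b1 b : path E s p -> onp s p a b0 -> onp s p a b1 ->
  b0 <= b -> b <= b1 -> onp s p a b.
Proof.
elim: p s b0 b1 b => [|y p IH] s b0 b1 b /=.
  move=> _ /onp_nil [-> ->] /onp_nil [_ ->] l1 l2; apply/onp_nil; split => //; lra.
case/andP => e pth /onp_cons h1 /onp_cons h2 l1 l2.
have [y1 y2 y3 y4] := quadv pth (mem_head y p).
case: h1 => [h1|h1]; case: h2 => [h2|h2].
- apply/onp_cons; left.
  case: (segF e h1) => -[h3 [h4 [h5 [h6 h7]]]];
  case: (segF e h2) => -[h8 [h9 [h10 [h11 h12]]]].
  + have -> : b = beta s by lra.
    exact: segH.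
  + lra.
  + lra.
  + rewrite h5; apply: segV => //; lra.
- have [h3 h4 h5 h6] := quad pth h2.
  case: (segF e h1) => -[h7 [h8 [h9 [h10 h11]]]].
  + apply/onp_cons; left; have -> : b = beta s by lra.
    exact: segH.
  + case: (leP b (beta y)) => hb.
    * apply/onp_cons; right; apply: (IH _ (beta y) b1 b pth _ h2) ; try lra.
      have -> : a = alpha y by lra.
      exact: onp_vertex (mem_head y p).
    * apply/onp_cons; left; rewrite h9; apply: segV => //; lra.
- have [h3 h4 h5 h6] := quad pth h1.
  case: (segF e h2) => -[h7 [h8 [h9 [h10 h11]]]].
  + have ha : a = alpha y by lra.
    apply/onp_cons; right; apply: (IH _ b0 (beta y) b pth h1); try lra.
    rewrite ha; exact: onp_vertex (mem_head y p).
  + case: (leP b (beta y)) => hb.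
    * apply/onp_cons; right; apply: (IH _ b0 (beta y) b pth h1); try lra.
      have -> : a = alpha y by lra.
      exact: onp_vertex (mem_head y p).
    * apply/onp_cons; left; rewrite h9; apply: segV => //; lra.
- by apply/onp_cons; right; apply: (IH _ _ _ _ pth h1 h2).
Qed.

Lemma std_lt s p : path E s p -> standard beta s p -> alpha s < alpha (last s p).
Proof.
move=> pth /hasP [e he /eqP hb].
have [h1 h2 h3] := pedges_mem pth he.
have [h4 _ _ _] := quadv pth h2.
have h3s : e.2 \in s :: p by rewrite inE h3 orbT.
have [_ h5 _ _] := quadv pth h3s.
case: (eHV h1) => -[h6 h7]; first lra.
by move: h7; rewrite hb ltxx.
Qed.

End Graph.

End A2.
Import A2.

Module A3.
Import Order.TTheory GRing.Theory Num.Theory.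
Local Open Scope ring_scope.
Arguments onp_vertex {R V alpha beta s p z}.
Arguments onp_cons {R V alpha beta s y p a b}.
Arguments onp_nil {R V alpha beta s a b}.
Arguments onseg_l {R V alpha beta u v}.
Arguments onseg_r {R V alpha beta u v}.
Set Implicit Arguments. Unset Strict Implicit. Unset Printing Implicit Defensive.

Section Pair.
Variables (R : realType) (V : finType) (E : rel V) (alpha beta : V -> R)
  (m n : nat) (src : 'I_m -> V) (snk : 'I_n -> V).
Hypothesis HG : SE_graph E alpha beta src snk.

Local Notation isrc := (is_src src).
Local Notation inn := (inner src snk).
Local Notation onp := (on_dpath alpha beta).

Definition sg (r : R) : int := if 0 < r then 1 else if r < 0 then -1 else 0.
Definition cV (u v : V) : int := if alpha u == alpha v then sg (beta v - beta u) else 0.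
Definition cH (u v : V) : int := if beta u == beta v then sg (alpha v - alpha u) else 0.

Lemma sg_pos r : 0 < r -> sg r = 1.
Proof. by rewrite /sg => ->. Qed.
Lemma sg_neg r : r < 0 -> sg r = -1.
Proof. by move=> h; rewrite /sg h; case: ltP => // h'; have := lt_trans h h'; rewrite ltxx. Qed.
Lemma sg0 : sg 0 = 0.
Proof. by rewrite /sg ltxx. Qed.

Definition cC (u v : V) : int := cH u v + cV u v.

Lemma sgN r : sg (- r) = - sg r.
Proof.
case: (ltgtP r 0) => h.
- by rewrite sg_pos ?sg_neg ?oppr_gt0.
- by rewrite sg_neg ?sg_pos ?oppr_lt0.
- by rewrite h oppr0 sg0 oppr0.
Qed.

Lemma cV_anti u v : cV u v = - cV v u.
Proof. by rewrite /cV eq_sym; case: eqP => _; rewrite ?oppr0 // -sgN opprB. Qed.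

Definition Lw (e : V * V) : seq (int * V) :=
  if isrc e.1 then [:: (1, e.2)]
  else if inn e.1 && inn e.2 && (beta e.1 == beta e.2) then [:: (-1, e.1); (1, e.2)]
  else [::].

Definition Lsum (g : V -> int) (e : V * V) : int := \sum_(iu <- Lw e) iu.1 * g iu.2.

Definition Kc (c : V -> V -> int) (e f : V * V) : int :=
  Lsum (fun v => Lsum (fun u => c u v) e) f.

Definition sigma (e : V * V) : int := \sum_(iu <- Lw e) iu.1.

Lemma pedges_cons (s y : V) p : pedges s (y :: p) = (s, y) :: pedges y p.
Proof. by []. Qed.

Lemma Lsum_step s y g : ~~ isrc s ->
  Lsum g (s, y) = g y - g s - (if Lw (s, y) == [::] then g y - g s else 0).
Proof.
move=> ns; rewrite /Lsum /Lw /= (negbTE ns); case: ifP => _ /=.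
- rewrite !big_cons big_nil /=; ring.
- rewrite big_nil /=; ring.
Qed.

Lemma tel0 s p g : path E s p -> ~~ isrc s ->
  \sum_(e <- pedges s p) Lsum g e =
  g (last s p) - g s - \sum_(e <- pedges s p | Lw e == [::]) (g e.2 - g e.1).
Proof.
elim: p s => [|y p IH] s /=; first by move=> _ _; rewrite /pedges /= !big_nil subrr subr0.
case/andP => e pth ns.
have ny := no_in HG e.
rewrite pedges_cons !big_cons (IH _ pth ny) (@Lsum_step s y g ns).
by case: ifP => _ /=; ring.
Qed.

Lemma tel s p g : path E s p -> p != [::] ->
  \sum_(e <- pedges s p) Lsum g e =
  g (last s p) - (if isrc s then 0 else g s) -
  \sum_(e <- pedges s p | Lw e == [::]) (g e.2 - g e.1).
Proof.
case: p => [|y p] //= /andP [e pth] _.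
case: (boolP (isrc s)) => hs.
  2: by rewrite (@tel0 s (y :: p) g) //= e.
rewrite pedges_cons !big_cons.
have hL : Lw (s, y) = [:: (1, y)] by rewrite /Lw /= hs.
rewrite hL /= (@tel0 y p g pth (no_in HG e)) /Lsum hL big_cons big_nil /=; ring.
Qed.

Lemma sigmaE e : sigma e = if isrc e.1 then 1 else 0.
Proof.
rewrite /sigma /Lw; case: ifP => _; first by rewrite big_cons big_nil addr0.
by case: ifP => _; rewrite ?big_cons ?big_nil //= addr0 addNr.
Qed.

Lemma Lw_vert e iu : iu \in Lw e -> iu.2 = e.1 \/ iu.2 = e.2.
Proof.
rewrite /Lw; case: ifP => _; first by rewrite inE => /eqP ->; right.
case: ifP => _ //; rewrite !inE => /orP [/eqP ->|/eqP ->]; by [left|right].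
Qed.

Lemma Kc_const c e f k :
  (forall iu jv, iu \in Lw e -> jv \in Lw f -> c iu.2 jv.2 = k) ->
  Kc c e f = k * sigma e * sigma f.
Proof.
move=> h; rewrite /Kc /Lsum /sigma.
rewrite (eq_big_seq (fun jv => jv.1 * (k * \sum_(iu <- Lw e) iu.1))).
  by rewrite -big_distrl /=; ring.
move=> jv hjv /=; congr (_ * _); rewrite big_distrr /=; apply: eq_big_seq => iu hiu /=.
by rewrite (h _ _ hiu hjv) mulrC.
Qed.

Lemma Kc_add c1 c2 e f : Kc (fun u v => c1 u v + c2 u v) e f = Kc c1 e f + Kc c2 e f.
Proof.
rewrite /Kc /Lsum -big_split /=; apply: eq_bigr => jv _.
rewrite -mulrDr; congr (_ * _); rewrite -big_split /=; apply: eq_bigr => iu _.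
by rewrite mulrDr.
Qed.

Lemma src_alpha v : isrc v -> alpha v = 0.
Proof. by case/existsP => i /eqP <-; case: (src_pos HG i). Qed.

Lemma Lw_H e : E e.1 e.2 -> Lw e != [::] -> beta e.1 = beta e.2 /\ alpha e.1 < alpha e.2.
Proof.
move=> ee; rewrite /Lw.
have hb : isrc e.1 || (beta e.1 == beta e.2) -> beta e.1 = beta e.2 /\ alpha e.1 < alpha e.2.
  case/orP => [hs|/eqP hb].
  - have [hb _] := src_edge HG ee hs; split => //.
    by case: (eHV HG ee) => -[h1 h2] //; move: h2; rewrite hb ltxx.
  - by split => //; case: (eHV HG ee) => -[h1 h2] //; move: h2; rewrite hb ltxx.
case: ifP => hs; first by move=> _; apply: hb; rewrite hs.
case: ifP => // /andP [_ h] _; apply: hb; by rewrite h orbT.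
Qed.

Lemma Lw_V e : E e.1 e.2 -> Lw e == [::] -> alpha e.1 = alpha e.2.
Proof.
move=> ee; rewrite /Lw; case: ifP => // hs; case: ifP => // hc _.
case: (eHV HG ee) => -[h1 h2] //.
have [i1 i2] := h_edge HG ee (negbT hs) h1.
by move: hc; rewrite i1 i2 h1 eqxx.
Qed.

Lemma cnt1 s p z : path E s p -> (z, last s p) \in pedges s p -> Lw (z, last s p) == [::] ->
  \sum_(e <- pedges s p | Lw e == [::]) (if e.2 == last s p then 1 else 0) = 1 :> int.
Proof.
move=> pth; have hu := path_uniq HG pth; move: pth hu.
elim: p s => [|y p IH] s //=.
case/andP => e pth hu; rewrite pedges_cons big_cons.
case: p IH pth hu => [|w p] IH pth hu.
  rewrite inE /pedges /= => /eqP [->] ->; rewrite eqxx /= big_nil; exact: addr0.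
have hyt : y != last w p.
  have hy : y \notin w :: p by move: hu => /= /andP [_ /andP [hy _]].
  apply: contra hy => /eqP ->; exact: mem_last.
rewrite /= (negbTE hyt) inE => /orP [/eqP [_ hh]|hin] hL.
  by move: hyt; rewrite -hh eqxx.
have hu' : uniq (y :: w :: p) by case/andP: hu.
rewrite (IH _ pth hu' hin hL); by case: ifP => _; rewrite ?add0r.
Qed.

#[local] Set Default Proof Using "All".
Variables (sX : V) (pX : seq V) (sY : V) (pY : seq V).
Hypotheses (HX : path E sX pX) (HY : path E sY pY)
  (stX : standard beta sX pX) (stY : standard beta sY pY)
  (Hwi : weakly_intersecting alpha beta sX pX sY pY)
  (Hend : alpha (last sX pX) = alpha (last sY pY))
  (Hst : alpha sX <> alpha sY \/ (alpha sX = 0 /\ alpha sY = 0)).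

Local Notation tX := (last sX pX).
Local Notation tY := (last sY pY).

Lemma common a b : onp sX pX a b -> onp sY pY a b ->
  exists z, z \in [:: sX; tX] /\ z \in [:: sY; tY] /\ a = alpha z /\ b = beta z.
Proof. by move=> h1 h2; apply/(Hwi a b). Qed.

Lemma ltX : alpha sX < alpha tX. Proof. exact: (std_lt HG HX stX). Qed.
Lemma ltY : alpha sY < alpha tY. Proof. exact: (std_lt HG HY stY). Qed.

Lemma sXY : sX <> sY.
Proof.
move=> hs.
have [h0 _] : alpha sX = 0 /\ alpha sY = 0 by case: Hst => // h; rewrite hs in h.
have ss := alpha0_src HG h0.
case hpx: pX => [|y1 p1]; first by move: stX; rewrite hpx.
case hpy: pY => [|y2 p2]; first by move: stY; rewrite hpy.
have := HX; rewrite hpx /= => /andP [e1 pth1].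
have := HY; rewrite hpy /= => /andP [e2 pth2].
have [hb1 _] := src_edge HG e1 ss.
have ss2 : isrc sY by rewrite -hs.
have [hb2 _] := src_edge HG e2 ss2.
have a1 : alpha sX < alpha y1 by case: (eHV HG e1) => -[h h'] //; move: h'; rewrite hb1 ltxx.
have a2 : alpha sY < alpha y2 by case: (eHV HG e2) => -[h h'] //; move: h'; rewrite hb2 ltxx.
have [_ t1 _ _] := quadv HG pth1 (mem_head y1 p1).
have [_ t2 _ _] := quadv HG pth2 (mem_head y2 p2).
have hs0 : alpha sY = 0 by rewrite -hs.
have [c [c1 [c2 c3]]] : exists c, c < alpha y1 /\ c < alpha y2 /\ 0 < c.
  case: (leP (alpha y1) (alpha y2)) => h.
  + by exists (alpha y1 / 2); split; [|split]; lra.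
  + by exists (alpha y2 / 2); split; [|split]; lra.
have P1 : onp sX pX c (beta sX).
  rewrite hpx; apply/onp_cons; left; apply: segH => //; lra.
have hb2' : beta sX = beta y2 by rewrite hs.
have P2 : onp sY pY c (beta sX).
  rewrite hpy -hs; apply/onp_cons; left; apply: segH => //; lra.
have [z [hz1 [_ [hz3 _]]]] := common P1 P2.
move: hz1; rewrite !inE => /orP [/eqP hz|/eqP hz].
- by rewrite hz in hz3; move: c3; rewrite hz3 h0 ltxx.
- rewrite hz hpx /= in hz3; rewrite hz3 in c1; move: (lt_le_trans c1 t1); rewrite ltxx.
  done.
Qed.

Lemma CP a b : onp sX pX a b -> onp sY pY a b -> tX = tY /\ a = alpha tX /\ b = beta tX.
Proof.
move=> h1 h2; have [z [hz1 [hz2 [-> ->]]]] := common h1 h2.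
have lx := ltX; have ly := ltY.
move: hz1 hz2; rewrite !inE => /orP [/eqP e1|/eqP e1] /orP [/eqP e2|/eqP e2].
- by case: sXY; rewrite -e1 -e2.
- have h : alpha sX = alpha tY by rewrite -e1 -e2.
  exfalso; have he := Hend; lra.
- have h : alpha tX = alpha sY by rewrite -e1 -e2.
  exfalso; have he := Hend; lra.
- by rewrite -e1 -e2 e1.
Qed.

Lemma CV u v : u \in sX :: pX -> v \in sY :: pY -> u = v -> u = tX /\ tX = tY.
Proof.
move=> hu hv e; subst v.
have [h1 [h2 h3]] := CP (onp_vertex hu) (onp_vertex hv).
by split => //; apply: (cinj HG).
Qed.

Definition Concl := beta tX < beta tY \/
  (tX = tY /\ exists z', (z', tY) \in pedges sY pY /\ alpha z' = alpha tY).

Lemma walk z p a b : path E z p -> {subset pedges z p <= pedges sY pY} ->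
  (forall a b, onp z p a b -> onp sY pY a b) -> last z p = tY ->
  onp z p a b -> alpha sX <= a -> (forall b1, onp sX pX a b1 -> b1 < b) -> Concl.
Proof.
have he := Hend.
elim: p z a b => [|y p IH] z a b /=.
- move=> _ _ _ hz /onp_nil [ha hb] hs hinv; left.
  have hv : onp sX pX (alpha tX) (beta tX) := onp_vertex (mem_last sX pX).
  rewrite he -hz -ha in hv; have := hinv _ hv; rewrite hb hz //.
- case/andP => e pth hsub hpts hl /onp_cons h hs hinv.
  have sub' : {subset pedges y p <= pedges sY pY}.
    by move=> f hf; apply: hsub; rewrite /pedges /= inE; apply/orP; right.
  have pts' : forall a b, onp y p a b -> onp sY pY a b.
    by move=> a' b' h'; apply: hpts; apply/onp_cons; right.
  case: h => [hseg|hr]; last exact: IH pth sub' pts' hl hr hs hinv.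
  have yY : onp sY pY (alpha y) (beta y) := pts' _ _ (onp_vertex (mem_head y p)).
  have [_ y2 y3 _] := quad HG HY yY.
  case: (segF HG e hseg) => -[h1 [h2 [h3 [h4 h5]]]].
  + apply: (IH _ (alpha y) (beta y) pth sub' pts' hl (onp_vertex (mem_head y p))); first lra.
    move=> b2 hb2; case: (ltP a (alpha y)) => ha.
    * have hat : a <= alpha tX by lra.
      have [b1 hb1] := pexist HG HX hs hat.
      have := pmono HG HX hb1 hb2 ha; have := hinv _ hb1; lra.
    * have ea : a = alpha y by lra.
      rewrite -ea in hb2; have := hinv _ hb2; lra.
  + case: (boolP ((y == tY) && (tX == tY))) => [/andP [/eqP hy /eqP ht] | hno].
    * right; split => //; exists z; split.
      - by apply: hsub; rewrite /pedges /= -hy mem_head.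
      - by rewrite -hy.
    * apply: (IH _ (alpha y) (beta y) pth sub' pts' hl (onp_vertex (mem_head y p))); first lra.
      move=> b2 hb2; have hb2' : b2 < b by apply: hinv; rewrite h3 h1.
      case: (ltP b2 (beta y)) => // hge; exfalso.
      have hQ : onp sY pY (alpha y) b2.
        apply: hpts; apply/onp_cons; left; rewrite -h1; apply: segV => //; lra.
      have [ht [ha' hb']] := CP hb2 hQ.
      have ey : y = tY.
        apply: (cinj HG); first by rewrite ha' ht.
        rewrite ht in hb'; lra.
      by move: hno; rewrite ey ht !eqxx.
Qed.

Lemma walk_main : lower alpha beta sX pX sY pY -> Concl.
Proof.
case=> a [b [b' [h1 [h2 h3]]]].
have [q1 q2 q3 q4] := quad HG HX h1.
apply: (walk HY (fun f hf => hf) (fun a b h => h) (erefl _) h2 q1).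
move=> b1 hb1; case: (ltP b1 b') => // hge; exfalso.
have hX : onp sX pX a b' := pconvex HG HX h1 hb1 (ltW h3) hge.
have [_ [_ hb]] := CP hX h2; lra.
Qed.


Lemma VE e v : e \in pedges sX pX -> alpha e.1 = alpha e.2 -> v \in sY :: pY ->
  cV e.2 v - cV e.1 v = if e.2 == v then 1 else 0.
Proof.
move=> he hae hv.
have [ee e1X e2X] := pedges_mem HX he.
have hbe : beta e.2 < beta e.1.
  by case: (eHV HG ee) => -[h1 h2] //; move: h2; rewrite hae ltxx.
have e2X' : e.2 \in sX :: pX by rewrite inE e2X orbT.
have [_ _ q3 _] := quadv HG HX e2X'.
case: eqP => [<-|ne].
- rewrite /cV eqxx hae eqxx subrr sg0 sg_neg //; lra.
- rewrite /cV -hae; case: eqP => ha; last by rewrite subrr.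
  case: (ltgtP (beta v) (beta e.2)) => h1.
  + by rewrite !sg_neg ?subrr //; lra.
  + case: (ltP (beta e.1) (beta v)) => h2.
    * by rewrite !sg_pos ?subrr //; lra.
    * exfalso.
      have hXv : onp sX pX (alpha v) (beta v).
        apply: (onp_edge he); rewrite -ha; apply: segV => //; lra.
      have [_ [_ hb]] := CP hXv (onp_vertex hv); lra.
  + by case: ne; apply: (cinj HG); [rewrite -hae ha | rewrite h1].
Qed.

Lemma Vsep e f : e \in pedges sX pX -> f \in pedges sY pY ->
  alpha e.1 = alpha e.2 -> alpha f.1 = alpha f.2 -> e.2 = f.2 -> False.
Proof.
move=> he hf hae haf e22.
have [ee e1X e2X] := pedges_mem HX he.
have [ff f1Y f2Y] := pedges_mem HY hf.
have hbe : beta e.2 < beta e.1.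
  by case: (eHV HG ee) => -[h1 h2] //; move: h2; rewrite hae ltxx.
have hbf : beta f.2 < beta f.1.
  by case: (eHV HG ff) => -[h1 h2] //; move: h2; rewrite haf ltxx.
have e2X' : e.2 \in sX :: pX by rewrite inE e2X orbT.
have [_ _ q3 _] := quadv HG HX e2X'.
have f2Y' : f.2 \in sY :: pY by rewrite inE f2Y orbT.
have [_ _ q4 _] := quadv HG HY f2Y'.
case: (leP (beta e.1) (beta f.1)) => h.
- have hY : onp sY pY (alpha e.1) (beta e.1).
    apply: (onp_edge hf); rewrite hae e22 -haf; apply: segV => //; rewrite -?e22; lra.
  have [_ [_ hb]] := CP (onp_vertex e1X) hY; lra.
- have hX : onp sX pX (alpha f.1) (beta f.1).
    apply: (onp_edge he); rewrite haf -e22 -hae; apply: segV => //; rewrite ?e22; lra.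
  have [ht [_ hb]] := CP hX (onp_vertex f1Y); rewrite ht in hb; lra.
Qed.

Lemma Hsep e f : e \in pedges sX pX -> f \in pedges sY pY ->
  beta e.1 = beta e.2 -> beta f.1 = beta f.2 -> beta e.1 = beta f.1 ->
  alpha e.2 < alpha f.1 \/ alpha f.2 < alpha e.1.
Proof.
move=> he hf hbe hbf hef.
have he' := Hend.
have [ee e1X e2X] := pedges_mem HX he.
have [ff f1Y f2Y] := pedges_mem HY hf.
have hae : alpha e.1 < alpha e.2.
  by case: (eHV HG ee) => -[h1 h2] //; move: h2; rewrite hbe ltxx.
have haf : alpha f.1 < alpha f.2.
  by case: (eHV HG ff) => -[h1 h2] //; move: h2; rewrite hbf ltxx.
have e2X' : e.2 \in sX :: pX by rewrite inE e2X orbT.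
have [_ q3 _ _] := quadv HG HX e2X'.
have f2Y' : f.2 \in sY :: pY by rewrite inE f2Y orbT.
have [_ q4 _ _] := quadv HG HY f2Y'.
case: (ltP (alpha e.2) (alpha f.1)) => h1; first by left.
case: (ltP (alpha f.2) (alpha e.1)) => h2; first by right.
exfalso; case: (leP (alpha e.1) (alpha f.1)) => h.
- have hX : onp sX pX (alpha f.1) (beta f.1).
    apply: (onp_edge he); rewrite -hef; apply: segH => //.
  have [_ [ha _]] := CP hX (onp_vertex f1Y); lra.
- have hY : onp sY pY (alpha e.1) (beta e.1).
    apply: (onp_edge hf); rewrite hef; apply: segH => //; lra.
  have [_ [ha _]] := CP (onp_vertex e1X) hY; lra.
Qed.


Lemma SHpair e f : e \in pedges sX pX -> f \in pedges sY pY -> Kc cH e f = 0.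
Proof.
move=> he hf.
have [ee _ _] := pedges_mem HX he.
have [ff _ _] := pedges_mem HY hf.
case: (eqVneq (Lw e) [::]) => hLe.
  by rewrite /Kc /Lsum /=; apply: big1 => jv _; rewrite hLe big_nil mulr0.
case: (eqVneq (Lw f) [::]) => hLf; first by rewrite /Kc /Lsum hLf big_nil.
have [hbe hae] := Lw_H ee hLe.
have [hbf haf] := Lw_H ff hLf.
have key : forall k, (forall u v, (u = e.1 \/ u = e.2) -> (v = f.1 \/ v = f.2) -> cH u v = k) ->
    Kc cH e f = k * sigma e * sigma f.
  move=> k hk; apply: Kc_const => iu jv hiu hjv; apply: hk; [exact: Lw_vert hiu | exact: Lw_vert hjv].
case: (eqVneq (beta e.1) (beta f.1)) => hef.
- have sgs : sigma e * sigma f = 0.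
    rewrite !sigmaE; case: ifP => s1; last by rewrite mul0r.
    case: ifP => s2; last by rewrite mulr0.
    exfalso; have a1 := src_alpha s1; have a2 := src_alpha s2.
    case: (Hsep he hf hbe hbf hef) => h; lra.
  case: (Hsep he hf hbe hbf hef) => h.
  + rewrite (key 1); first by rewrite -mulrA sgs mulr0.
    move=> u v hu hv; rewrite /cH.
    have -> : beta u == beta v.
      by apply/eqP; case: hu => ->; case: hv => ->; rewrite -?hbe -?hbf hef.
    rewrite sg_pos //; case: hu => ->; case: hv => ->; lra.
  + rewrite (key (-1)); first by rewrite -mulrA sgs mulr0.
    move=> u v hu hv; rewrite /cH.
    have -> : beta u == beta v.
      by apply/eqP; case: hu => ->; case: hv => ->; rewrite -?hbe -?hbf hef.
    rewrite sg_neg //; case: hu => ->; case: hv => ->; lra.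
- rewrite (key 0) ?mul0r // => u v hu hv; rewrite /cH.
  have -> : (beta u == beta v) = false.
    apply/negbTE; apply: contra hef => /eqP h; apply/eqP; move: h.
    by case: hu => ->; case: hv => ->; rewrite -?hbe -?hbf => ->.
  done.
Qed.


Definition DX v : int := \sum_(e <- pedges sX pX | Lw e == [::]) (if e.2 == v then 1 else 0).

Lemma pX_nil : pX != [::].
Proof. by move: stX; case: pX. Qed.

Lemma TX_val v : v \in sY :: pY ->
  \sum_(e <- pedges sX pX) Lsum (fun u => cV u v) e =
  cV tX v - (if isrc sX then 0 else cV sX v) - DX v.
Proof.
move=> hv; rewrite (tel _ HX pX_nil) /DX; congr (_ - _).
rewrite big_seq_cond [RHS]big_seq_cond; apply: eq_bigr => e /andP [he hL].
have [ee _ _] := pedges_mem HX he.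
exact: VE he (Lw_V ee hL) hv.
Qed.

Lemma DX0 v : (forall e, e \in pedges sX pX -> Lw e == [::] -> e.2 != v) -> DX v = 0.
Proof.
move=> h; rewrite /DX big_seq_cond; apply: big1 => e /andP [he hL].
by rewrite (negbTE (h e he hL)).
Qed.

Lemma DX_sY : DX sY = 0.
Proof.
apply: DX0 => e he _; apply/eqP => h.
have [_ _ e2X] := pedges_mem HX he.
have e2X' : e.2 \in sX :: pX by rewrite inE e2X orbT.
have [h1 h2] := CV e2X' (mem_head sY pY) h.
by have := ltY; rewrite -h2 -h1 h ltxx.
Qed.


Lemma DX_tY_ne : tX != tY -> DX tY = 0.
Proof.
move=> ht; apply: DX0 => e he _; apply/eqP => h.
have [_ _ e2X] := pedges_mem HX he.
have e2X' : e.2 \in sX :: pX by rewrite inE e2X orbT.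
have [h1 h2] := CV e2X' (mem_last sY pY) h.
by move: ht; rewrite h2 eqxx.
Qed.

Lemma DX_f1 f : f \in pedges sY pY -> Lw f == [::] -> DX f.1 = 0.
Proof.
move=> hf hLf; apply: DX0 => e he _; apply/eqP => h.
have [_ _ e2X] := pedges_mem HX he.
have e2X' : e.2 \in sX :: pX by rewrite inE e2X orbT.
have [ff f1Y f2Y] := pedges_mem HY hf.
have [h1 h2] := CV e2X' f1Y h.
have haf := Lw_V ff hLf.
have hbf : beta f.2 < beta f.1.
  by case: (eHV HG ff) => -[k1 k2] //; move: k2; rewrite haf ltxx.
have f2Y' : f.2 \in sY :: pY by rewrite inE f2Y orbT.
have [_ _ q _] := quadv HG HY f2Y'.
by move: hbf; rewrite -h h1 h2 => hbf; have := lt_le_trans hbf q; rewrite ltxx.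
Qed.

Lemma DX_f2 f : f \in pedges sY pY -> Lw f == [::] -> DX f.2 = 0.
Proof.
move=> hf hLf; apply: DX0 => e he hLe; apply/eqP => h.
have [ee _ _] := pedges_mem HX he.
have [ff _ _] := pedges_mem HY hf.
exact: Vsep he hf (Lw_V ee hLe) (Lw_V ff hLf) h.
Qed.

Lemma DX_lastV z' : (z', tY) \in pedges sY pY -> alpha z' = alpha tY -> DX tY = 0.
Proof.
move=> hf ha; apply: DX0 => e he hLe; apply/eqP => h.
have [ee _ _] := pedges_mem HX he.
exact: (Vsep he hf (Lw_V ee hLe) ha h).
Qed.

Lemma cV_sX_tY : cV sX tY = 0.
Proof.
have he := Hend; have lx := ltX.
rewrite /cV; case: eqP => // h; exfalso; lra.
Qed.

Lemma cV_sX_sY : ~~ isrc sY -> cV sX sY = 0.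
Proof.
move=> ns; rewrite /cV; case: eqP => // h; exfalso.
case: Hst => [//|[_ h0]]; move: ns; by rewrite (alpha0_src HG h0).
Qed.

Lemma vY_ne_sX v : v \in sY :: pY -> v != sX.
Proof.
move=> hv; apply/eqP => h.
have [h1 h2] := CV (mem_head sX pX) hv (esym h).
by have := ltX; rewrite -h1 ltxx.
Qed.

End Pair.

Lemma wi_sym (R : realType) (V : finType) (alpha beta : V -> R) sX pX sY pY :
  weakly_intersecting alpha beta sX pX sY pY -> weakly_intersecting alpha beta sY pY sX pX.
Proof.
move=> h a b; split.
- by case=> h1 h2; have [z [z1 [z2 z3]]] := (h a b).1 (conj h2 h1); exists z.
- by case=> z [z1 [z2 z3]]; case: ((h a b).2 (ex_intro _ z (conj z2 (conj z1 z3)))).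
Qed.


End A3.
Import A3.

Module A4.
Import Order.TTheory GRing.Theory Num.Theory.
Local Open Scope ring_scope.
Arguments onp_vertex {R V alpha beta s p z}.
Arguments onp_cons {R V alpha beta s y p a b}.
Arguments onp_nil {R V alpha beta s a b}.
Set Implicit Arguments. Unset Strict Implicit. Unset Printing Implicit Defensive.

Section Final.
Variables (R : realType) (V : finType) (E : rel V) (alpha beta : V -> R)
  (m n : nat) (src : 'I_m -> V) (snk : 'I_n -> V)
  (K : fieldType) (A : unitAlgType K) (q : K) (x : V -> A).
Hypotheses (HG : SE_graph E alpha beta src snk) (q0 : q != 0)
  (LG : LG_relations E alpha beta src snk q x).

Local Notation isrc := (is_src src).
Local Notation inn := (inner src snk).
Local Notation cC := (cC alpha beta).
Local Notation cH := (cH alpha beta).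
Local Notation cV := (cV alpha beta).

Lemma XR1 u v : inn u -> inn v -> qc q (x u) (x v) (cC u v).
Proof.
move=> iu iv.
case: (eqVneq u v) => [<-|neq].
  by rewrite /cC /cH /cV !eqxx !subrr sg0 /qc expr0z scale1r.
have [_ rel] := LG; have [rH [rV rC]] := rel u v iu iv (elimN eqP neq).
have [_ [rV' _]] := rel v u iv iu (fun h => elimN eqP neq (esym h)).
have [rH' _] := rel v u iv iu (fun h => elimN eqP neq (esym h)).
have nsu : ~~ is_snk snk u by case/andP: iu.
have nsv : ~~ is_snk snk v by case/andP: iv.
have nru : ~~ isrc u by case/andP: iu.
have nrv : ~~ isrc v by case/andP: iv.
rewrite /cC /cH /cV.
case: (eqVneq (beta u) (beta v)) => hb.
- have ha : alpha u != alpha v.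
    by apply/negP => /eqP ha; move: neq; rewrite (cinj HG ha hb) eqxx.
  rewrite (negbTE ha) addr0.
  have hc := (conv_beta HG (u := u) (v := v) (fun h => elimN idP nsu h.1)).1 hb.
  case: (ltgtP (alpha u) (alpha v)) => h.
  + rewrite sg_pos; last by rewrite subr_gt0.
    case: hc => hc; first by rewrite /qc expr1z; exact: rH hc.
    by have := connectH HG hc; case=> _; rewrite leNgt h.
  + rewrite sg_neg; last by rewrite subr_lt0.
    case: hc => hc; first by have := connectH HG hc; case=> _; rewrite leNgt h.
    apply: (qc_sym q0); rewrite /qc expr1z; exact: rH' hc.
  + by move: ha; rewrite h eqxx.
- rewrite add0r.
  case: (eqVneq (alpha u) (alpha v)) => ha.
  + have hc := (conv_alpha HG (u := u) (v := v) (fun h => elimN idP nru h.1)).1 ha.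
    case: (ltgtP (beta u) (beta v)) => h.
    * rewrite sg_pos; last by rewrite subr_gt0.
      case: hc => hc; first by have := connectV HG hc; case=> _; rewrite leNgt h.
      rewrite /qc expr1z; exact: rV' hc.
    * rewrite sg_neg; last by rewrite subr_lt0.
      case: hc => hc; last by have := connectV HG hc; case=> _; rewrite leNgt h.
      apply: (qc_sym q0); rewrite /qc expr1z; exact: rV hc.
    * by move: hb; rewrite h eqxx.
  + rewrite /qc expr0z scale1r; apply: rC.
    * by apply/negP => /(connectH HG) [h _]; move: hb; rewrite h eqxx.
    * by apply/negP => /(connectH HG) [h _]; move: hb; rewrite h eqxx.
    * by apply/negP => /(connectV HG) [h _]; move: ha; rewrite h eqxx.
    * by apply/negP => /(connectV HG) [h _]; move: ha; rewrite h eqxx.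
Qed.


Local Notation Lsum := (Lsum beta src snk).
Local Notation Kc := (Kc beta src snk).
Local Notation Lw := (Lw beta src snk).
Local Notation ew := (edge_weight beta src snk x).

Lemma XR2 e v : E e.1 e.2 -> inn v -> qc q (ew e) (x v) (Lsum (fun u => cC u v) e).
Proof.
move=> ee iv; rewrite /edge_weight /Lsum /Lw.
case: ifP => hs.
- have [_ i2] := src_edge HG ee hs.
  rewrite big_cons big_nil /= mul1r addr0; exact: XR1 i2 iv.
- case: ifP => hc.
  + case/andP: hc => /andP [i1 i2] _.
    rewrite !big_cons big_nil /= mul1r addr0 mulN1r.
    apply: (qc_mull q0); last exact: XR1 i2 iv.
    apply: (qc_invl q0); [exact: LG.1 _ i1 | exact: XR1 i1 iv].
  + rewrite big_nil; exact: qc1l.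
Qed.

Lemma XR3 e f : E e.1 e.2 -> E f.1 f.2 -> qc q (ew e) (ew f) (Kc cC e f).
Proof.
move=> ee ff; rewrite /Kc.
set a := ew e.
set G := (fun v => A3.Lsum beta src snk (fun u => cC u v) e).
have hG : forall v, inn v -> qc q a (x v) (G v) by move=> v iv; exact: XR2 ee iv.
rewrite /edge_weight /A3.Lsum /A3.Lw.
case: ifP => hs.
- have [_ i2] := src_edge HG ff hs.
  rewrite big_cons big_nil /= mul1r addr0; exact: hG.
- case: ifP => hc.
  + case/andP: hc => /andP [i1 i2] _.
    rewrite !big_cons big_nil /= mul1r addr0 mulN1r.
    apply: (qc_mulr q0); last exact: hG.
    apply: (qc_invr q0); [exact: LG.1 _ i1 | exact: hG].
  + rewrite big_nil; exact: qc1r.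
Qed.

Lemma XR4 sP pP sQ pQ : path E sP pP -> path E sQ pQ ->
  qc q (path_weight beta src snk x sP pP) (path_weight beta src snk x sQ pQ)
    (\sum_(e <- pedges sP pP) \sum_(f <- pedges sQ pQ) Kc cC e f).
Proof.
move=> HP HQ; rewrite /path_weight; apply: (qc_prodl q0) => e he.
apply: (qc_prodr q0) => f hf.
have [ee _ _] := pedges_mem HP he; have [ff _ _] := pedges_mem HQ hf.
exact: XR3.
Qed.

End Final.

End A4.
Import A4.

Module A5.
Import Order.TTheory GRing.Theory Num.Theory.
Local Open Scope ring_scope.
Arguments onp_vertex {R V alpha beta s p z}.
Arguments onp_cons {R V alpha beta s y p a b}.
Arguments onp_nil {R V alpha beta s a b}.
Set Implicit Arguments. Unset Strict Implicit. Unset Printing Implicit Defensive.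

Section Geo.
Variables (R : realType) (V : finType) (E : rel V) (alpha beta : V -> R)
  (m n : nat) (src : 'I_m -> V) (snk : 'I_n -> V).
Hypothesis HG : SE_graph E alpha beta src snk.
Variables (sP : V) (pP : seq V) (sQ : V) (pQ : seq V).
Hypotheses (HP : path E sP pP) (HQ : path E sQ pQ)
  (stP : standard beta sP pP) (stQ : standard beta sQ pQ)
  (Hwi : weakly_intersecting alpha beta sP pP sQ pQ)
  (Hend : alpha (last sP pP) = alpha (last sQ pQ))
  (Hst : alpha sP <> alpha sQ \/ (alpha sP = 0 /\ alpha sQ = 0))
  (Hlow : lower alpha beta sP pP sQ pQ).

Local Notation tP := (last sP pP).
Local Notation tQ := (last sQ pQ).
Local Notation isrc := (is_src src).
Local Notation Lsum := (Lsum beta src snk).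
Local Notation Kc := (Kc beta src snk).
Local Notation Lw := (Lw beta src snk).
Local Notation DX := (DX beta src snk).
Local Notation cV := (cV alpha beta).
Local Notation cH := (cH alpha beta).
Local Notation cC := (cC alpha beta).

Lemma Hst' : alpha sQ <> alpha sP \/ (alpha sQ = 0 /\ alpha sP = 0).
Proof. case: Hst => h; [left => h'; exact: h (esym h') | right; tauto]. Qed.

Lemma SV_val : \sum_(e <- pedges sP pP) \sum_(f <- pedges sQ pQ) Kc cV e f =
  cV tP tQ - DX sP pP tQ + DX sQ pQ tP.
Proof.
have nQ : pQ != [::] by move: stQ; case: pQ.
have step1 : forall e, \sum_(f <- pedges sQ pQ) Kc cV e f =
   Lsum (fun u => cV u tQ) e - (if isrc sQ then 0 else Lsum (fun u => cV u sQ) e)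
   - \sum_(f <- pedges sQ pQ | Lw f == [::])
       (Lsum (fun u => cV u f.2) e - Lsum (fun u => cV u f.1) e).
  move=> e; exact: (tel HG (fun v => Lsum (fun u => cV u v) e) HQ nQ).
rewrite (eq_bigr _ (fun e _ => step1 e)) !sumrB.
have -> : \sum_(e <- pedges sP pP) (if isrc sQ then 0 else Lsum (fun u => cV u sQ) e) =
  if isrc sQ then 0 else \sum_(e <- pedges sP pP) Lsum (fun u => cV u sQ) e.
  by case: ifP => _ //; rewrite big1.
rewrite exchange_big /=.
have Hwi' := wi_sym Hwi; have Hend' := esym Hend; have Hst2 := Hst'.
have TPv : forall v, v \in sQ :: pQ -> \sum_(i <- pedges sP pP) Lsum (fun u => cV u v) i =
    cV tP v - (if isrc sP then 0 else cV sP v) - DX sP pP v.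
  by move=> v hv; exact: (TX_val HG HP HQ stP stQ Hwi Hend Hst hv).
rewrite TPv ?mem_last // (cV_sX_tY HG HP HQ stP stQ Hwi Hend Hst) if_same subr0.
have -> : (if isrc sQ then 0 else \sum_(e <- pedges sP pP) Lsum (fun u => cV u sQ) e) = 0.
  case: ifP => hs //.
  rewrite TPv ?mem_head // (DX_sY HG HP HQ stP stQ Hwi Hend Hst).
  rewrite (cV_sX_sY HG HP HQ stP stQ Hwi Hend Hst (negbT hs)) if_same subr0.
  by rewrite cV_anti (cV_sX_tY HG HQ HP stQ stP Hwi' Hend' Hst2) oppr0.
have -> : \sum_(j <- pedges sQ pQ | Lw j == [::])
     \sum_(i <- pedges sP pP) (Lsum (fun u => cV u j.2) i - Lsum (fun u => cV u j.1) i) =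
     - DX sQ pQ tP.
  rewrite /A3.DX -sumrN big_seq_cond [RHS]big_seq_cond; apply: eq_bigr => f /andP [hf hL].
  have [ff f1Q f2Q] := pedges_mem HQ hf.
  have f2Q' : f.2 \in sQ :: pQ by rewrite inE f2Q orbT.
  rewrite sumrB TPv // TPv //.
  rewrite (DX_f2 HG HP HQ stP stQ Hwi Hend Hst hf hL) (DX_f1 HG HP HQ stP stQ Hwi Hend Hst hf hL).
  have hV := Lw_V HG ff hL.
  have h1 := VE HG HQ HP stQ stP Hwi' Hend' Hst2 hf hV (mem_last sP pP).
  have h2 := VE HG HQ HP stQ stP Hwi' Hend' Hst2 hf hV (mem_head sP pP).
  have ne := vY_ne_sX HG HP HQ stP stQ Hwi Hend Hst f2Q'.
  rewrite (negbTE ne) in h2.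
  rewrite (cV_anti _ _ tP f.2) (cV_anti _ _ tP f.1) (cV_anti _ _ sP f.2) (cV_anti _ _ sP f.1).
  case: ifP => _; case: ifP => _ in h1 *; lra.
rewrite opprK subr0; ring.
Qed.

Lemma SH_zero : \sum_(e <- pedges sP pP) \sum_(f <- pedges sQ pQ) Kc cH e f = 0.
Proof.
rewrite big_seq; apply: big1 => e he; rewrite big_seq; apply: big1 => f hf.
exact: (SHpair HG HP HQ stP stQ Hwi Hend Hst he hf).
Qed.

Lemma S_one : \sum_(e <- pedges sP pP) \sum_(f <- pedges sQ pQ) Kc cC e f = 1.
Proof.
have -> : \sum_(e <- pedges sP pP) \sum_(f <- pedges sQ pQ) Kc cC e f =
  \sum_(e <- pedges sP pP) \sum_(f <- pedges sQ pQ) Kc cH e f +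
  \sum_(e <- pedges sP pP) \sum_(f <- pedges sQ pQ) Kc cV e f.
  rewrite -big_split; apply: eq_bigr => e _; rewrite -big_split; apply: eq_bigr => f _.
  exact: (Kc_add beta src snk cH cV e f).
rewrite SH_zero add0r SV_val.
have Hwi' := wi_sym Hwi; have Hend' := esym Hend; have Hst2 := Hst'.
case: (walk_main HG HP HQ stP stQ Hwi Hend Hst Hlow) => [hb | [ht [z' [hz ha]]]].
- have ne : tP != tQ by apply/eqP => h; move: hb; rewrite h ltxx.
  rewrite (DX_tY_ne HG HP HQ stP stQ Hwi Hend Hst ne).
  rewrite (DX_tY_ne HG HQ HP stQ stP Hwi' Hend' Hst2 _); last by rewrite eq_sym.
  rewrite /A3.cV Hend eqxx sg_pos; first by rewrite subr0 addr0.
  by rewrite subr_gt0.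
- rewrite (DX_lastV HG HP HQ stP stQ Hwi Hend Hst hz ha).
  rewrite /A3.cV ht eqxx subrr sg0 subr0 add0r.
  have [ff _ _] := pedges_mem HQ hz.
  have hL : Lw (z', tQ) == [::].
    apply/negPn/negP => hn; have [_ h] := Lw_H HG ff hn; move: h; rewrite /= ha ltxx.
    done.
  exact: (cnt1 HG HQ hz hL).
Qed.

End Geo.


End A5.
Import A5.

Unset Implicit Arguments.
Theorem lemmaA3 (R : realType) (V : finType) (E : rel V) (alpha beta : V -> R)
  (m n : nat) (src : 'I_m -> V) (snk : 'I_n -> V)
  (K : fieldType) (A : unitAlgType K) (q : K) (x : V -> A)
  (sP : V) (pP : seq V) (sQ : V) (pQ : seq V) :
  SE_graph E alpha beta src snk ->
  q != 0 ->
  LG_relations E alpha beta src snk q x ->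
  path E sP pP -> path E sQ pQ ->
  standard beta sP pP -> standard beta sQ pQ ->
  weakly_intersecting alpha beta sP pP sQ pQ ->
  alpha (last sP pP) = alpha (last sQ pQ) ->
  (alpha sP <> alpha sQ \/ (alpha sP = 0 /\ alpha sQ = 0)) ->
  lower alpha beta sP pP sQ pQ ->
  path_weight beta src snk x sP pP * path_weight beta src snk x sQ pQ
    = q *: (path_weight beta src snk x sQ pQ * path_weight beta src snk x sP pP).
Proof.
move=> HG q0 LG HP HQ stP stQ Hwi Hend Hst Hlow.
have := XR4 HG q0 LG HP HQ.
by rewrite (S_one HG HP HQ stP stQ Hwi Hend Hst Hlow) /qc expr1z.
Qed.
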